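(* Consider economies with individual endowments and single-peaked preferences. A rule on this domain satisfies own-peak-onliness, efficiency, the endowments guarantee, and not obvious manipulability (NOM) if and only if it is a simple reallocation rule.
   Context: Let $N=\{1,\dots,n\}$ be a finite set of agents. A preference $R_i$ is a continuous complete preorder on $\mathbb{R}_+\cup\{\infty\}$ ($P_i$ strict, $I_i$ indifference); its peak $p(R_i)$ is the set of maximal elements. $R_i$ is single-peaked if $p(R_i)$ is a singleton (identified with its element) and for $x,x'\in\mathbb{R}_+$, $xP_ix'$ whenever $x'<x\le p(R_i)$ or $p(R_i)\le x<x'$; $\mathcal{SP}$ is the set of these. An economy is $(R,\omega)$ with $R\in\mathcal{SP}^n$ and an endowment profile $\omega=(\omega_i)_{i\in N}\in\mathbb{R}^n_+$ with $\Omega=\sum_j\omega_j>0$. A rule assigns to each economy $\varphi(R,\omega)\in\mathbb{R}^n_+$ with $\sum_j\varphi_j(R,\omega)=\Omega$. Properties: Efficiency: no $x\in\mathbb{R}^n_+$ with $\sum_jx_j=\Omega$ has $x_iR_i\varphi_i(R,\omega)$ for all $i$ and $x_iP_i\varphi_i(R,\omega)$ for some $i$. Own-peak-onliness: $p(R_i')=p(R_i)$ implies $\varphi_i(R,\omega)=\varphi_i(R_i',R_{-i},\omega)$. Endowments guarantee: $p(R_i)=\omega_i$ implies $\varphi_i(R,\omega)I_i\omega_i$. Option set $O^\varphi(R_i,\omega)=\{\varphi_i(R_i,R_{-i},\omega):R_{-i}\in\mathcal{SP}^{n-1}\}$; $R_i'$ is a manipulation at $(R_i,\omega)$ if $\varphi_i(R_i',R_{-i},\omega)P_i\varphi_i(R_i,R_{-i},\omega)$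 for some $R_{-i}$, and an obvious manipulation if moreover each $x'\in O^\varphi(R_i',\omega)$ satisfies $x'P_ix$ for some $x\in O^\varphi(R_i,\omega)$; NOM means there is no obvious manipulation. Simple reallocation rule: let $z(R,\omega)=\sum_jp(R_j)-\Omega$; agent $i$ is simple if ($z\ge0$ and $p(R_i)<\omega_i$) or ($z\le0$ and $p(R_i)>\omega_i$). An own-peak-only rule is a simple reallocation rule if for every economy it assigns to each simple agent his peak $p(R_i)$ and to each non-simple agent an amount in the closed interval between $\omega_i$ and $p(R_i)$. *)

(* Defs.v *)
From HB Require Import structures.
From mathcomp Require Import all_boot all_order all_algebra.
From mathcomp Require Import boolp classical_sets reals ereal topology.
Set Implicit Arguments. Unset Strict Implicit. Unset Printing Implicit Defensive.
Import Order.TTheory GRing.Theory Num.Theory.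
Local Open Scope classical_set_scope.
Local Open Scope ring_scope.
Local Open Scope ereal_scope.

Section Reallocation.
Variable R : realType.

(* The consumption space R_+ \cup {oo}, seen inside the extended reals. *)
Definition dom (x : \bar R) : Prop := 0 <= x.

(* A preference is a binary relation ("weakly preferred to") on the
   consumption space; only its restriction to [dom] matters. *)
Definition pref := \bar R -> \bar R -> Prop.

Definition strict (Ri : pref) (x y : \bar R) : Prop := Ri x y /\ ~ Ri y x.
Definition indiff (Ri : pref) (x y : \bar R) : Prop := Ri x y /\ Ri y x.

Definition complete_preorder (Ri : pref) : Prop :=
  (forall x y, dom x -> dom y -> Ri x y \/ Ri y x) /\
  (forall x y z, dom x -> dom y -> dom z -> Ri x y -> Ri y z -> Ri x z).

Definition continuous_pref (Ri : pref) : Prop :=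
  forall x, dom x ->
    closed [set y | dom y /\ Ri y x] /\ closed [set y | dom y /\ Ri x y].

Definition peak_set (Ri : pref) : set (\bar R) :=
  [set p | dom p /\ forall y, dom y -> Ri p y].

Definition peak (Ri : pref) : \bar R :=
  match pselect (exists p, peak_set Ri p) with
  | left h => projT1 (cid h)
  | right _ => 0
  end.

Definition single_peaked (Ri : pref) : Prop :=
  complete_preorder Ri /\ continuous_pref Ri /\
  (exists p, peak_set Ri = [set p]) /\
  (forall x x' : R, (0 <= x)%R -> (0 <= x')%R ->
     ((x'%:E < x%:E /\ x%:E <= peak Ri) \/ (peak Ri <= x%:E /\ x%:E < x'%:E)) ->
     strict Ri x%:E x'%:E).

Definition profile (n : nat) := 'I_n -> pref.

Definition SP_profile n (P : profile n) : Prop := forall j, single_peaked (P j).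

Definition total n (w : 'I_n -> R) : R := (\sum_(j < n) w j)%R.

Definition endowment n (w : 'I_n -> R) : Prop :=
  (forall j, (0 <= w j)%R) /\ (0 < total w)%R.

Definition economy n (P : profile n) (w : 'I_n -> R) : Prop :=
  SP_profile P /\ endowment w.

Definition rule_fun (n : nat) := profile n -> ('I_n -> R) -> ('I_n -> R).

Definition is_rule n (phi : rule_fun n) : Prop :=
  forall P w, economy P w ->
    (forall j, (0 <= phi P w j)%R) /\ total (phi P w) = total w.

Definition upd n (P : profile n) (i : 'I_n) (Ri : pref) : profile n :=
  fun j => if j == i then Ri else P j.

Definition efficient n (phi : rule_fun n) : Prop :=
  forall P w, economy P w ->
    ~ exists x : 'I_n -> R,
        (forall j, (0 <= x j)%R) /\ total x = total w /\
        (forall j, P j (x j)%:E (phi P w j)%:E) /\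
        (exists j, strict (P j) (x j)%:E (phi P w j)%:E).

Definition own_peak_only n (phi : rule_fun n) : Prop :=
  forall P w i Ri', economy P w -> single_peaked Ri' ->
    peak Ri' = peak (P i) -> phi P w i = phi (upd P i Ri') w i.

Definition endowments_guarantee n (phi : rule_fun n) : Prop :=
  forall P w i, economy P w -> peak (P i) = (w i)%:E ->
    indiff (P i) (phi P w i)%:E (w i)%:E.

Definition option_set n (phi : rule_fun n) (i : 'I_n) (Ri : pref)
  (w : 'I_n -> R) : set R :=
  [set x | exists Q : profile n,
      (forall j, j != i -> single_peaked (Q j)) /\ phi (upd Q i Ri) w i = x].

Definition manipulation n (phi : rule_fun n) (i : 'I_n) (Ri Ri' : pref)
  (w : 'I_n -> R) : Prop :=
  exists Q : profile n, (forall j, j != i -> single_peaked (Q j)) /\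
    strict Ri (phi (upd Q i Ri') w i)%:E (phi (upd Q i Ri) w i)%:E.

Definition obvious_manipulation n (phi : rule_fun n) (i : 'I_n) (Ri Ri' : pref)
  (w : 'I_n -> R) : Prop :=
  manipulation phi i Ri Ri' w /\
  forall x', option_set phi i Ri' w x' ->
    exists2 x, option_set phi i Ri w x & strict Ri x'%:E x%:E.

Definition NOM n (phi : rule_fun n) : Prop :=
  forall i Ri Ri' w, endowment w -> single_peaked Ri -> single_peaked Ri' ->
    ~ obvious_manipulation phi i Ri Ri' w.

Definition excess n (P : profile n) (w : 'I_n -> R) : \bar R :=
  (\sum_(j < n) peak (P j)) - (total w)%:E.

Definition simple_agent n (P : profile n) (w : 'I_n -> R) (i : 'I_n) : Prop :=
  (0 <= excess P w /\ peak (P i) < (w i)%:E) \/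
  (excess P w <= 0 /\ (w i)%:E < peak (P i)).

Definition simple_reallocation_rule n (phi : rule_fun n) : Prop :=
  own_peak_only phi /\
  forall P w, economy P w -> forall i,
    (simple_agent P w i -> (phi P w i)%:E = peak (P i)) /\
    (~ simple_agent P w i ->
       Order.min (w i)%:E (peak (P i)) <= (phi P w i)%:E /\
       (phi P w i)%:E <= Order.max (w i)%:E (peak (P i))).

End Reallocation.

(* Main.v *)
Require Import Defs.
From HB Require Import structures.
From mathcomp Require Import all_boot all_order all_algebra.
From mathcomp Require Import boolp classical_sets reals ereal topology normedtype.
From mathcomp Require Import lra.
Set Implicit Arguments. Unset Strict Implicit. Unset Printing Implicit Defensive.
Import Order.TTheory GRing.Theory Num.Theory.
Local Open Scope classical_set_scope.
Local Open Scope ring_scope.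
Local Open Scope ereal_scope.

Definition dd (R : realType) (p a b : R) (y : \bar R) : \bar R :=
  match y with
  | r%:E => (if (r <= p)%R then ((p - r) / a)%R else ((r - p) / b)%R)%:E
  | _ => +oo end.

Arguments dd : simpl never.
Definition mkp (R : realType) (p a b : R) : pref R :=
  fun y x => dd p a b y <= dd p a b x.

Lemma dd_ge0 (R : realType) (p a b : R) y : (0 < a)%R -> (0 < b)%R -> 0 <= dd p a b y.
Proof.
move=> a0 b0; case: y => [r| |]; rewrite /dd ?leey // lee_fin.
case: ifP => h; apply: divr_ge0; lra.
Qed.

Lemma dd_le (R : realType) (p a b r y : R) : (0 < a)%R -> (0 < b)%R ->
  (dd p a b y%:E <= r%:E) = ((p - r * a <= y)%R && (y <= p + r * b)%R).
Proof.
move=> a0 b0; rewrite /dd lee_fin.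
case: ifP => h.
  rewrite ler_pdivrMr //; apply/idP/idP.
    move=> H; apply/andP; split; nra.
  by case/andP; lra.
rewrite ler_pdivrMr //; apply/idP/idP.
  move=> H; apply/andP; split; move/negbT: h; rewrite -ltNge => h; nra.
by case/andP; lra.
Qed.

Lemma dd_ge (R : realType) (p a b r y : R) : (0 < a)%R -> (0 < b)%R ->
  (r%:E <= dd p a b y%:E) = ((y <= p - r * a)%R || (p + r * b <= y)%R).
Proof.
move=> a0 b0; rewrite /dd lee_fin.
case: ifP => h.
  rewrite ler_pdivlMr //; apply/idP/idP.
    move=> H; apply/orP; left; nra.
  case/orP => H; nra.
move/negbT: h; rewrite -ltNge => h.
rewrite ler_pdivlMr //; apply/idP/idP.
  move=> H; apply/orP; right; nra.
case/orP => H; nra.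
Qed.

Lemma peak_eqE (R : realType) (Ri : pref R) p : peak_set Ri = [set p] -> peak Ri = p.
Proof.
move=> H; rewrite /peak; case: pselect => [h|[]]; last by exists p; rewrite H.
by case: (cid h) => q /=; rewrite H.
Qed.

Lemma mkp_cont (R : realType) (p a b : R) : (0 < a)%R -> (0 < b)%R ->
  continuous_pref (mkp p a b).
Proof.
move=> a0 b0 x _; rewrite /mkp.
have : 0 <= dd p a b x by exact: dd_ge0.
case: (dd p a b x) => [r| |] // r0; split.
- have -> : [set y | dom y /\ dd p a b y <= r%:E] =
    [set y | (p - r * a)%:E <= y] `&` [set y | y <= (p + r * b)%:E] `&` [set y | 0 <= y].
    apply/seteqP; split => -[y| |] //=; rewrite /dom.
    + by case=> h; rewrite dd_le // => /andP[h1 h2]; rewrite !lee_fin.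
    + by case=> _; rewrite /dd leye_eq.
    + by case; rewrite leeNy_eq.
    + move=> -[[h1 h2] h3]; rewrite !lee_fin in h1 h2 h3; split; [by rewrite lee_fin | by rewrite dd_le // h1 h2].
    + by case=> -[_]; rewrite leye_eq.
    + by case=> _; rewrite leeNy_eq.
  apply: closedI; first apply: closedI.
  + exact: closed_ereal_le_ereal.
  + exact: closed_ereal_ge_ereal.
  + exact: closed_ereal_le_ereal.
- have -> : [set y | dom y /\ r%:E <= dd p a b y] =
    ([set y | y <= (p - r * a)%:E] `|` [set y | (p + r * b)%:E <= y]) `&` [set y | 0 <= y].
    apply/seteqP; split => -[y| |] //=; rewrite /dom.
    + by case=> h; rewrite dd_ge // => /orP[h1|h1]; (split; last by rewrite lee_fin); [left|right]; rewrite lee_fin.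
    + by move=> _; split => //; right; rewrite leey.
    + by case; rewrite leeNy_eq.
    + move=> -[[h1|h1] h3]; rewrite !lee_fin in h1 h3; (split; [by rewrite lee_fin | by rewrite dd_ge // h1 ?orbT]).
    + by move=> _; split => //; rewrite /dd leey.
    + by case=> _; rewrite leeNy_eq.
  apply: closedI; first apply: closedU.
  + exact: closed_ereal_ge_ereal.
  + exact: closed_ereal_le_ereal.
  + exact: closed_ereal_le_ereal.
- have -> : [set y | dom y /\ dd p a b y <= +oo] = [set y | 0 <= y].
    by apply/seteqP; split => y /=; [case|rewrite /dom leey].
  exact: closed_ereal_le_ereal.
- have -> : [set y | dom y /\ +oo <= dd p a b y] = [set y | +oo <= y].
    apply/seteqP; split => -[y| |] //=; rewrite /dom ?leey //.
    - by case=> _; rewrite /dd leye_eq.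
    - by case; rewrite leeNy_eq.
  exact: closed_ereal_le_ereal.
Qed.

Lemma dd_p (R : realType) (p a b : R) : dd p a b p%:E = 0.
Proof. by rewrite /dd lexx subrr mul0r. Qed.

Lemma mkp_peak_set (R : realType) (p a b : R) : (0 <= p)%R -> (0 < a)%R -> (0 < b)%R ->
  peak_set (mkp p a b) = [set p%:E].
Proof.
move=> p0 a0 b0; apply/seteqP; split => q /=.
  case=> dq /(_ p%:E); rewrite /mkp dd_p /dom lee_fin => /(_ p0) h.
  case: q dq h => [r| |] //= dq h.
  - have : dd p a b r%:E <= 0%R%:E by [].
    rewrite dd_le // !mul0r subr0 addr0 => /andP[h1 h2].
    by congr EFin; apply/eqP; rewrite eq_le h1 h2.
move=> ->; split; first by rewrite /dom lee_fin.
by move=> y _; rewrite /mkp dd_p dd_ge0.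
Qed.

Lemma mkp_peak (R : realType) (p a b : R) : (0 <= p)%R -> (0 < a)%R -> (0 < b)%R ->
  peak (mkp p a b) = p%:E.
Proof. by move=> p0 a0 b0; apply: peak_eqE; apply: mkp_peak_set. Qed.

Lemma mkp_strict (R : realType) (p a b : R) x y :
  dd p a b x < dd p a b y -> strict (mkp p a b) x y.
Proof. by move=> h; split; [exact: ltW | rewrite /mkp; apply/negP; rewrite -ltNge]. Qed.

Lemma mkp_sp (R : realType) (p a b : R) : (0 <= p)%R -> (0 < a)%R -> (0 < b)%R ->
  single_peaked (mkp p a b).
Proof.
move=> p0 a0 b0; split; last split; last split.
- split; rewrite /mkp.
    by move=> x y _ _; apply/orP; exact: le_total.
  by move=> x y z _ _ _; exact: le_trans.
- exact: mkp_cont.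
- by exists p%:E; apply: mkp_peak_set.
move=> x x' x0 x'0; rewrite mkp_peak // !lee_fin !lte_fin => h.
apply: mkp_strict; rewrite /dd lte_fin.
case: h => -[h1 h2].
  rewrite h2 ifT; last lra.
  by rewrite ltr_pM2r ?invr_gt0 //; lra.
case: ifP => h3.
  have -> : x = p by apply/eqP; rewrite eq_le h3 h1.
  rewrite ifF; last by apply/negbTE; rewrite -ltNge; lra.
  rewrite subrr mul0r; apply: divr_gt0 => //; lra.
rewrite ifF; last by apply/negbTE; rewrite -ltNge; move/negbT: h3; rewrite -ltNge; lra.
by rewrite ltr_pM2r ?invr_gt0 //; lra.
Qed.

Lemma sp_peak (R : realType) (Ri : pref R) : single_peaked Ri -> peak_set Ri (peak Ri).
Proof.
case=> _ [_ [[p hp] _]]; rewrite (peak_eqE hp) hp //.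
Qed.

Lemma sp_dom_peak (R : realType) (Ri : pref R) : single_peaked Ri -> dom (peak Ri).
Proof. by move/sp_peak => []. Qed.

Lemma sp_refl (R : realType) (Ri : pref R) x : single_peaked Ri -> dom x -> Ri x x.
Proof. by case=> -[tot _] _ dx; case: (tot x x dx dx). Qed.

Lemma sp_uniq (R : realType) (Ri : pref R) x : single_peaked Ri -> dom x ->
  Ri x (peak Ri) -> x = peak Ri.
Proof.
move=> sp dx h; have [dp mp] := sp_peak sp.
case: sp => -[_ tr] [_ [[p hp] _]].
have : peak_set Ri x.
  by split => // y dy; apply: tr h (mp y dy) => //.
by rewrite hp (peak_eqE hp).
Qed.

Lemma sp_strict (R : realType) (Ri : pref R) (x x' : R) : single_peaked Ri ->
  (0 <= x)%R -> (0 <= x')%R ->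
  ((x'%:E < x%:E /\ x%:E <= peak Ri) \/ (peak Ri <= x%:E /\ x%:E < x'%:E)) ->
  strict Ri x%:E x'%:E.
Proof. by case=> _ [_ [_ h]]; apply: h. Qed.

Lemma sp_between (R : realType) (Ri : pref R) (a b : R) : single_peaked Ri ->
  (0 <= a)%R -> (0 <= b)%R ->
  Order.min a%:E (peak Ri) <= b%:E -> b%:E <= Order.max a%:E (peak Ri) ->
  Ri b%:E a%:E.
Proof.
move=> sp a0 b0; rewrite ge_min le_max.
have [->|nab] := eqVneq b a; first by move=> _ _; apply: sp_refl => //; rewrite /dom lee_fin.
have [ap|pa] := leP a%:E (peak Ri).
- move=> /orP[h1|h1] /orP[h2|h2].
  + by move: nab; rewrite (@le_anti _ _ a b) ?eqxx // -!lee_fin h1 h2.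
  + apply: (proj1 (sp_strict sp _ _ _)) => //; left; split => //.
    by rewrite lt_neqAle h1 andbT eq_sym; apply/eqP => -[] /eqP; rewrite (negbTE nab).
  + by move: nab; rewrite (@le_anti _ _ a b) ?eqxx // -!lee_fin (le_trans ap h1) h2.
  + apply: (proj1 (sp_strict sp _ _ _)) => //; left; split => //.
    rewrite lt_neqAle (le_trans ap h1) andbT eq_sym; apply/eqP => -[] /eqP.
    by rewrite (negbTE nab).
- move=> /orP[h1|h1] /orP[h2|h2].
  + by move: nab; rewrite (@le_anti _ _ a b) ?eqxx // -!lee_fin h1 h2.
  + by move: nab; rewrite (@le_anti _ _ a b) ?eqxx // -!lee_fin h1 (le_trans h2 (ltW pa)).
  + apply: (proj1 (sp_strict sp _ _ _)) => //; right; split => //.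
    by rewrite lt_neqAle h2 andbT; apply/eqP => -[] /eqP; rewrite (negbTE nab).
  + apply: (proj1 (sp_strict sp _ _ _)) => //; right; split => //.
    rewrite lt_neqAle (le_trans h2 (ltW pa)) andbT; apply/eqP => -[] /eqP.
    by rewrite (negbTE nab).
Qed.

Lemma upd_id (R : realType) n (P : profile R n) i : upd P i (P i) = P.
Proof. by apply: funext => j; rewrite /upd; case: eqP => // ->. Qed.

Lemma upd_eq (R : realType) n (P : profile R n) i Ri : upd P i Ri i = Ri.
Proof. by rewrite /upd eqxx. Qed.

Lemma upd_neq (R : realType) n (P : profile R n) i Ri j : j != i -> upd P i Ri j = P j.
Proof. by rewrite /upd => /negbTE ->. Qed.

Lemma economy_upd (R : realType) n (Q : profile R n) i Ri (w : 'I_n -> R) :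
  (forall j, j != i -> single_peaked (Q j)) -> single_peaked Ri -> endowment w ->
  economy (upd Q i Ri) w.
Proof.
move=> hQ hR ew; split => // j; rewrite /upd.
by case: eqP => // /eqP; apply: hQ.
Qed.

Lemma sum_eq_le (R : realType) n (f g : 'I_n -> R) :
  (forall j, (f j <= g j)%R) -> Defs.total f = Defs.total g -> forall k, f k = g k.
Proof.
move=> fg tfg k.
have h : (\sum_(j < n) (g j - f j))%R = 0%R by rewrite sumrB -/(Defs.total g) -/(Defs.total f) tfg subrr.
have hz : forall j, (0 <= g j - f j)%R by move=> j; rewrite subr_ge0.
have := @psumr_eq0P R _ xpredT (fun j => (g j - f j)%R) (fun j _ => hz j) h k isT.
by move/eqP; rewrite subr_eq0 => /eqP ->.
Qed.

Lemma simple_bounds (R : realType) n (phi : rule_fun R n) P w :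
  simple_reallocation_rule phi -> economy P w -> forall j,
  Order.min (w j)%:E (peak (P j)) <= (phi P w j)%:E /\
  (phi P w j)%:E <= Order.max (w j)%:E (peak (P j)).
Proof.
move=> [_ H] ec j; have [h1 h2] := H P w ec j.
have [s|ns] := pselect (simple_agent P w j); last exact: h2.
by rewrite (h1 s) ge_min le_max lexx !orbT.
Qed.

Lemma simple_eff (R : realType) n (phi : rule_fun R n) :
  is_rule phi -> simple_reallocation_rule phi -> efficient phi.
Proof.
move=> rule sr P w ec [x [x0 [tx [hx [k hk]]]]].
have [phi0 tphi] := rule P w ec.
have [[_ H] B] := (sr, simple_bounds sr ec).
have spP := ec.1.
have nstrict : forall (Ri : pref R) y, ~ strict Ri y y by move=> Ri y [].
have [z0|z0] := leP 0 (excess P w).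
- have le_p : forall j, (phi P w j)%:E <= peak (P j).
    move=> j; have [pw|wp] := ltP (peak (P j)) (w j)%:E.
      by rewrite ((H P w ec j).1 _) //; left.
    by have [_] := B j; rewrite le_max => /orP[h|//]; apply: le_trans wp.
  have ge : forall j, (phi P w j <= x j)%R.
    move=> j; rewrite leNgt; apply/negP => xlt.
    have := sp_strict (spP j) (phi0 j) (x0 j) (or_introl (conj _ (le_p j))).
    by rewrite lte_fin => /(_ xlt) [_]; apply; apply: hx.
  have := sum_eq_le ge _ k; rewrite tx tphi => /(_ erefl) e.
  by move: hk; rewrite e => /nstrict.
- have ge_p : forall j, peak (P j) <= (phi P w j)%:E.
    move=> j; have [wp|pw] := ltP (w j)%:E (peak (P j)).
      by rewrite ((H P w ec j).1 _) //; right; split => //; apply: ltW.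
    by have [+ _] := B j; rewrite ge_min => /orP[h|//]; apply: le_trans h.
  have ge : forall j, (x j <= phi P w j)%R.
    move=> j; rewrite leNgt; apply/negP => xlt.
    have := sp_strict (spP j) (phi0 j) (x0 j) (or_intror (conj (ge_p j) _)).
    by rewrite lte_fin => /(_ xlt) [_]; apply; apply: hx.
  have := sum_eq_le ge _ k; rewrite tx tphi => /(_ erefl) e.
  by move: hk; rewrite e => /nstrict.
Qed.

Lemma bounds_eq (R : realType) (a : R) (v : R) (p : \bar R) : p = a%:E ->
  Order.min a%:E p <= v%:E -> v%:E <= Order.max a%:E p -> v = a.
Proof.
move=> ->; rewrite minxx maxxx => h1 h2; apply/eqP; rewrite eq_le -!lee_fin h1 h2.
by [].
Qed.

Lemma simple_EG (R : realType) n (phi : rule_fun R n) :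
  simple_reallocation_rule phi -> endowments_guarantee phi.
Proof.
move=> sr P w i ec hp; have [h1 h2] := simple_bounds sr ec i.
rewrite (bounds_eq hp h1 h2); have w0 := ec.2.1 i.
by split; apply: sp_refl (ec.1 i) _; rewrite /dom lee_fin.
Qed.

Lemma simple_NOM (R : realType) n (phi : rule_fun R n) :
  is_rule phi -> simple_reallocation_rule phi -> NOM phi.
Proof.
move=> rule sr i Ri Ri' w ew spR spR' [_ hobv].
pose Q : profile R n := fun j => mkp (w j) 1 1.
have hQ : forall j, single_peaked (Q j) by move=> j; apply: mkp_sp => //; exact: ew.1.
have o : option_set phi i Ri' w (w i).
  exists Q; split; first by move=> j _; apply: hQ.
  have ec : economy (upd Q i Ri') w by apply: economy_upd.
  have oth : forall j, j != i -> phi (upd Q i Ri') w j = w j.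
    move=> j ji; have [h1 h2] := simple_bounds sr ec j.
    apply: (bounds_eq _ h1 h2); rewrite upd_neq //; apply: mkp_peak => //; exact: ew.1.
  have [_ tt] := rule _ _ ec; move: tt; rewrite /Defs.total (bigD1 i) //= [RHS](bigD1 i) //=.
  rewrite (eq_bigr (fun j => w j)); last by move=> j ji; apply: oth.
  by move=> e; apply: (addIr (\sum_(j < n | j != i) w j)%R).
have [x [Q' [hQ' hx]] hs] := hobv (w i) o.
have ec : economy (upd Q' i Ri) w by apply: economy_upd.
have [h1 h2] := simple_bounds sr ec i.
rewrite upd_eq hx in h1 h2.
have x0 : (0 <= x)%R by rewrite -hx; exact: ((rule _ _ ec).1 i).
by case: hs => _; apply; apply: sp_between spR (ew.1 i) x0 h1 h2.
Qed.

Lemma domE (R : realType) (x : R) : (0 <= x)%R -> dom x%:E.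
Proof. by rewrite /dom lee_fin. Qed.

Lemma not_weak_strict (R : realType) (Ri : pref R) x y : single_peaked Ri ->
  dom x -> dom y -> ~ Ri x y -> strict Ri y x.
Proof.
by case=> -[tot _] _ dx dy nxy; case: (tot x y dx dy) => // h; split.
Qed.

Lemma nec_IR (R : realType) n (phi : rule_fun R n) :
  is_rule phi -> endowments_guarantee phi -> NOM phi ->
  forall P w, economy P w -> forall i, P i (phi P w i)%:E (w i)%:E.
Proof.
move=> rule eg nom P w ec i.
have w0 := ec.2.1 i; have f0 := (rule _ _ ec).1 i.
apply: contrapT => nIR.
have hs := not_weak_strict (ec.1 i) (domE f0) (domE w0) nIR.
pose Rl := mkp (w i) 1 1.
have spl : single_peaked Rl by apply: mkp_sp.
have cl : forall Q : profile R n, (forall j, j != i -> single_peaked (Q j)) ->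
    phi (upd Q i Rl) w i = w i.
  move=> Q hQ; have ec' : economy (upd Q i Rl) w by apply: economy_upd => //; exact: ec.2.
  have := eg _ _ i ec'; rewrite upd_eq mkp_peak // => /(_ erefl) [h _].
  have := sp_uniq spl (domE ((rule _ _ ec').1 i)); rewrite mkp_peak // => /(_ h).
  by case.
apply: (nom i (P i) Rl w ec.2 (ec.1 i) spl); split.
  exists P; split; first by move=> j _; exact: ec.1 j.
  by rewrite cl ?upd_id // => j _; exact: ec.1 j.
move=> x' [Q [hQ <-]]; rewrite cl //.
exists (phi P w i) => //.
by exists P; split; [move=> j _; exact: ec.1 j | rewrite upd_id].
Qed.

Lemma steep_low (R : realType) (p f w : R) : (f < p)%R -> (f < w)%R ->
  let b := (`|w - p| / (p - f) + 1)%R in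
  (0 < b)%R /\ dd p 1 b w%:E < dd p 1 b f%:E.
Proof.
move=> fp fw b.
have pf0 : (0 < p - f)%R by rewrite subr_gt0.
have b0 : (0 < b)%R by rewrite /b; apply: ltr_wpDl => //; apply: divr_ge0 => //; exact: ltW.
split => //; rewrite /dd lte_fin (ltW fp) /=.
rewrite !divr1; case: ifP => h; first lra.
rewrite ltr_pdivrMr // /b mulrDr mulr1.
have -> : ((p - f) * (`|w - p| / (p - f)) = `|w - p|)%R.
  by rewrite mulrC divfK // gt_eqF.
move/negbT: h; rewrite -ltNge => h.
by rewrite ger0_norm; lra.
Qed.

Lemma steep_high (R : realType) (p f w : R) : (p < f)%R -> (w < f)%R ->
  let a := (`|w - p| / (f - p) + 1)%R in
  (0 < a)%R /\ dd p a 1 w%:E < dd p a 1 f%:E.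
Proof.
move=> pf wf a.
have pf0 : (0 < f - p)%R by rewrite subr_gt0.
have a0 : (0 < a)%R by rewrite /a; apply: ltr_wpDl => //; apply: divr_ge0 => //; exact: ltW.
split => //; rewrite /dd lte_fin.
have -> : (f <= p)%R = false by apply/negbTE; rewrite -ltNge.
rewrite !divr1; case: ifP => h; last lra.
rewrite ltr_pdivrMr // /a mulrDr mulr1.
have -> : ((f - p) * (`|w - p| / (f - p)) = `|w - p|)%R.
  by rewrite mulrC divfK // gt_eqF.
by rewrite ler0_norm ?subr_le0 //; lra.
Qed.

Lemma nec_bounds (R : realType) n (phi : rule_fun R n) :
  is_rule phi -> own_peak_only phi -> endowments_guarantee phi -> NOM phi ->
  forall P w, economy P w -> forall i,
  Order.min (w i)%:E (peak (P i)) <= (phi P w i)%:E /\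
  (phi P w i)%:E <= Order.max (w i)%:E (peak (P i)).
Proof.
move=> rule opo eg nom P w ec i.
have w0 := ec.2.1 i; have f0 := (rule _ _ ec).1 i.
have key : forall Ri', single_peaked Ri' -> peak Ri' = peak (P i) ->
    Ri' (phi P w i)%:E (w i)%:E.
  move=> Ri' sp hp; rewrite (opo P w i Ri' ec sp hp).
  have ec' : economy (upd P i Ri') w.
    by apply: economy_upd => //; [move=> j _; exact: ec.1 j | exact: ec.2].
  by have := nec_IR rule eg nom ec' i; rewrite upd_eq.
have dp := sp_dom_peak (ec.1 i).
split.
- rewrite leNgt; apply/negP; rewrite lt_min => /andP[fw fp].
  case ep : (peak (P i)) fp dp key => [r| |] // fp dp key.
  + rewrite lte_fin in fp fw; rewrite /dom lee_fin in dp.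
    have [b0 lt] := steep_low fp fw.
    have sp := mkp_sp dp ltr01 b0.
    have [_] := mkp_strict lt; apply; apply: key => //.
    exact: mkp_peak.
  + have := sp_strict (ec.1 i) w0 f0 (or_introl (conj fw _)).
    rewrite ep leey => /(_ isT) [_]; apply; apply: key => //; exact: ec.1 i.
- rewrite leNgt; apply/negP; rewrite gt_max => /andP[wf pf].
  case ep : (peak (P i)) pf dp key => [r| |] // pf dp key.
  rewrite lte_fin in pf wf; rewrite /dom lee_fin in dp.
  have [a0 lt] := steep_high pf wf.
  have sp := mkp_sp dp a0 ltr01.
  have [_] := mkp_strict lt; apply; apply: key => //.
  exact: mkp_peak.
Qed.

Lemma eps_exists (R : realType) (d v : R) (p : \bar R) : (0 < d)%R -> v%:E < p ->
  exists e, (0 < e)%R /\ (e <= d)%R /\ (v + e)%:E <= p.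
Proof.
move=> d0; case: p => [s| |] // vs.
- rewrite lte_fin in vs; exists (Order.min d (s - v)%R); split; last split.
  + by rewrite lt_min d0 subr_gt0 vs.
  + by rewrite ge_min lexx.
  + rewrite lee_fin -lerBrDl ge_min lexx orbT //.
- by exists d; split; [|split; [|rewrite leey]].
Qed.

Lemma sum_delta (R : realType) n (t : 'I_n) (e : R) :
  (\sum_(j < n) (if j == t then e else 0))%R = e.
Proof. by rewrite (bigD1 t) //= eqxx big1 ?addr0 // => j /negbTE ->. Qed.

Lemma transfer (R : realType) n (phi : rule_fun R n) P w (g t : 'I_n) (e : R) :
  is_rule phi -> efficient phi -> economy P w -> g != t -> (0 < e)%R ->
  peak (P g) <= (phi P w g - e)%:E -> (phi P w t + e)%:E <= peak (P t) -> False.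
Proof.
move=> rule eff ec gt e0 hg ht.
have [f0 tf] := rule _ _ ec.
pose f := phi P w.
pose x := fun j => if j == g then (f g - e)%R else if j == t then (f t + e)%R else f j.
have xg0 : (0 <= f g - e)%R.
  by rewrite -lee_fin; apply: le_trans hg; exact: sp_dom_peak (ec.1 g).
have xt0 : (0 <= f t + e)%R by apply: addr_ge0; [exact: f0 | exact: ltW].
have sg : strict (P g) (f g - e)%:E (f g)%:E.
  apply: sp_strict (ec.1 g) xg0 (f0 g) _; right; split => //.
  by rewrite lte_fin ltrBlDr ltrDl.
have st : strict (P t) (f t + e)%:E (f t)%:E.
  apply: sp_strict (ec.1 t) xt0 (f0 t) _; left; split => //.
  by rewrite lte_fin ltrDl.
apply: (eff P w ec); exists x; split; last split; last split.
- move=> j; rewrite /x; case: eqP => // _; case: eqP => // _; exact: f0.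
- rewrite -tf /Defs.total.
  have -> : (\sum_(j < n) x j = \sum_(j < n) (f j + (if j == t then e else 0)
              - (if j == g then e else 0)))%R.
    apply: eq_bigr => j _; rewrite /x.
    case: (eqVneq j g) => [->|jg]; first by rewrite (negbTE gt) addr0.
    case: (eqVneq j t) => [->|jt]; first by rewrite subr0.
    by rewrite addr0 subr0.
  by rewrite sumrB big_split /= !sum_delta addrK.
- move=> j; rewrite /x; case: (eqVneq j g) => [->|jg]; first exact: sg.1.
  case: (eqVneq j t) => [->|jt]; first exact: st.1.
  by apply: sp_refl (ec.1 j) _; apply: domE; exact: f0.
- by exists g; rewrite /x eqxx.
Qed.

Lemma excessE (R : realType) n (P : profile R n) (w : 'I_n -> R) (q : 'I_n -> R) :
  (forall j, peak (P j) = (q j)%:E) ->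
  excess P w = (\sum_(j < n) q j - Defs.total w)%:E.
Proof.
move=> hq; rewrite /excess (eq_bigr (fun j => (q j)%:E)) //.
by rewrite sumEFin EFinB.
Qed.

Lemma eff_le (R : realType) n (phi : rule_fun R n) P w :
  is_rule phi -> efficient phi -> economy P w -> 0 <= excess P w ->
  forall k, (phi P w k)%:E <= peak (P k).
Proof.
move=> rule eff ec z0 k; have [f0 tf] := rule _ _ ec.
rewrite leNgt; apply/negP => pk.
have [l lt] : exists l, (phi P w l)%:E < peak (P l).
  apply: contrapT => nex.
  have hall : forall l, peak (P l) <= (phi P w l)%:E.
    by move=> l; rewrite leNgt; apply/negP => h; apply: nex; exists l.
  have fin : forall l, peak (P l) = (fine (peak (P l)))%:E.
    move=> l; have := hall l; have := sp_dom_peak (ec.1 l).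
    by case: (peak (P l)).
  move: z0; rewrite (excessE w fin) lee_fin subr_ge0 => z0.
  have le : forall l, (fine (peak (P l)) <= phi P w l)%R.
    by move=> l; rewrite -lee_fin -fin.
  have tq : Defs.total (fun l => fine (peak (P l))) = Defs.total (phi P w).
    apply/eqP; rewrite eq_le; apply/andP; split.
      by apply: ler_sum => l _; exact: le.
    by rewrite tf; exact: z0.
  have e := sum_eq_le le tq k.
  by move: pk; rewrite (fin k) e ltxx.
have kl : k != l.
  apply/eqP => e; move: pk lt; rewrite e => h1 h2.
  by have := lt_trans h1 h2; rewrite ltxx.
have dk := sp_dom_peak (ec.1 k).
move: pk dk; case ek : (peak (P k)) => [r| |] // pk dk.
rewrite lte_fin in pk; rewrite /dom lee_fin in dk.
have [|e [e0 [ed he]]] := eps_exists (d := (phi P w k - r)%R) (_ : (0 < phi P w k - r)%R) lt.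
  by rewrite subr_gt0.
apply: (transfer rule eff ec kl e0 _ he).
by rewrite ek lee_fin lerBrDr -lerBrDl.
Qed.

Lemma eff_ge (R : realType) n (phi : rule_fun R n) P w :
  is_rule phi -> efficient phi -> economy P w -> excess P w <= 0 ->
  forall k, peak (P k) <= (phi P w k)%:E.
Proof.
move=> rule eff ec z0 k; have [f0 tf] := rule _ _ ec.
have fin : forall l, peak (P l) = (fine (peak (P l)))%:E.
  move=> l; have := sp_dom_peak (ec.1 l); case el : (peak (P l)) => [r| |] //= _.
  have : \sum_(j < n) peak (P j) = +oo.
    rewrite (bigD1 l) //= el addye //.
    have : 0 <= \sum_(j < n | j != l) peak (P j).
      by apply: sume_ge0 => j _; exact: sp_dom_peak (ec.1 j).
    by case: (\sum_(j < n | j != l) peak (P j)).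
  by move: z0; rewrite /excess => + e; rewrite e.
rewrite leNgt; apply/negP => pk.
have [l lt] : exists l, peak (P l) < (phi P w l)%:E.
  apply: contrapT => nex.
  have hall : forall l, (phi P w l)%:E <= peak (P l).
    by move=> l; rewrite leNgt; apply/negP => h; apply: nex; exists l.
  move: z0; rewrite (excessE w fin) lee_fin subr_le0 => z0.
  have le : forall l, (phi P w l <= fine (peak (P l)))%R.
    by move=> l; rewrite -lee_fin -fin.
  have tq : Defs.total (phi P w) = Defs.total (fun l => fine (peak (P l))).
    apply/eqP; rewrite eq_le; apply/andP; split.
      by apply: ler_sum => l _; exact: le.
    by rewrite tf; exact: z0.
  have e := sum_eq_le le tq k.
  by move: pk; rewrite (fin k) -e ltxx.
have kl : l != k.
  apply/eqP => e; move: pk lt; rewrite e => h1 h2.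
  by have := lt_trans h1 h2; rewrite ltxx.
move: lt; rewrite (fin l) lte_fin => lt.
have [|e [e0 [ed he]]] := eps_exists (d := (phi P w l - fine (peak (P l)))%R)
   (_ : (0 < phi P w l - fine (peak (P l)))%R) pk.
  by rewrite subr_gt0.
apply: (transfer rule eff ec kl e0 _ he).
by rewrite (fin l) lee_fin lerBrDr -lerBrDl.
Qed.

Theorem proposition3 (R : realType) (n : nat) (phi : rule_fun R n) :
  is_rule phi ->
  ((own_peak_only phi /\ efficient phi /\ endowments_guarantee phi /\ NOM phi)
   <-> simple_reallocation_rule phi).
Proof.
move=> rule; split.
- move=> [opo [eff [eg nom]]]; split => // P w ec i.
  have [B1 B2] := nec_bounds rule opo eg nom ec i.
  split => //.
  case=> -[z0 h].
  + apply/eqP; rewrite eq_le (eff_le rule eff ec z0 i) /=.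
    move: B1; rewrite ge_min => /orP[h1|//].
    by have := lt_le_trans h (le_trans h1 (eff_le rule eff ec z0 i)); rewrite ltxx.
  + apply/eqP; rewrite eq_le (eff_ge rule eff ec z0 i) andbT.
    move: B2; rewrite le_max => /orP[h1|//].
    by have := lt_le_trans h (le_trans (eff_ge rule eff ec z0 i) h1); rewrite ltxx.
- move=> sr; split; first exact: sr.1.
  split; first exact: simple_eff.
  split; first exact: simple_EG.
  exact: simple_NOM.
Qed.
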